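(* The operator $T_2\,\omega_r^{1/2}$, defined on the subspace $D_0$, is bounded.
   Context: Let $\mathcal{K}=L^2(\mathbb{R}^3,d^3k)$, $\omega(\vec k)=|\vec k|$. Let $\Gamma$ be the antiunitary involution $(\Gamma v)(\vec k)=\overline{v(-\vec k)}$. For $\epsilon>0$ let $P_\epsilon$ be the orthogonal projection onto $\{v\in\mathcal{K}: v(\vec k)=0\text{ for }|\vec k|<\epsilon\}$, and $D_0=\bigcup_{\epsilon>0}P_\epsilon\mathcal{K}$. Fix a strictly decreasing sequence $(\epsilon_i)_{i\in\mathbb{N}}$ of positive numbers with $\epsilon_i\to0$; put $P_i=P_{\epsilon_{i+1}}-P_{\epsilon_i}$ for $i\in\mathbb{N}$ and $P_0=P_{\epsilon_1}$. Fix finite-rank orthogonal projections $Q_i$ ($i\in\mathbb{N}$) with $Q_i\Gamma=\Gamma Q_i$ and $Q_iP_i=Q_i$, and numbers $b_i\in(0,1)$ with $b_i\to0$ and $\sum_i\frac{\epsilon_i}{b_i^2}\mathrm{rk}\,Q_i<\infty$. On $D_0$ define $T_2=\mathbf{1}+\sum_i(\frac{1}{b_i}-1)Q_i$ (only finitely many terms act nontrivially on any vector of $D_0$). Let $\omega_r=\omega(\mathbf{1}-P_0)+\epsilon_1P_0$; note $\omega_r^{1/2}D_0=D_0$. *)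

(* Defs.v *)
From mathcomp Require Import all_boot all_order all_algebra.
From mathcomp Require Import all_classical all_reals all_analysis.
Set Implicit Arguments.
Unset Strict Implicit.
Unset Printing Implicit Defensive.
Import Order.TTheory GRing.Theory Num.Theory.
Local Open Scope ring_scope.
Local Open Scope classical_set_scope.

Section Defs.
Variable R : realType.

Definition mu3 := (((@lebesgue_measure R) \x (@lebesgue_measure R))
                     \x (@lebesgue_measure R))%E.

(* Complex numbers are represented as pairs (real part, imaginary part). *)
Definition cpx := (R * R)%type.
Definition cmul (z w : cpx) : cpx := (z.1 * w.1 - z.2 * w.2, z.1 * w.2 + z.2 * w.1).
Definition cscale (r : R) (z : cpx) : cpx := (r * z.1, r * z.2).
Definition cmodsq (z : cpx) : R := z.1 ^+ 2 + z.2 ^+ 2.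

(* complex-valued functions on R^3 (representatives of elements of K) *)
Definition vec := (R * R * R)%type -> cpx.

Definition absk (k : R * R * R) : R := Num.sqrt (k.1.1 ^+ 2 + k.1.2 ^+ 2 + k.2 ^+ 2).

Definition sq_int (v : vec) : Prop :=
  [/\ measurable_fun setT (fun k => (v k).1),
      measurable_fun setT (fun k => (v k).2) &
      (\int[mu3]_k (cmodsq (v k))%:E < +oo)%E].

Definition normsq (v : vec) : \bar R := (\int[mu3]_k (cmodsq (v k))%:E)%E.

(* inner product <u, v> = \int conj(u) v, antilinear in the first slot *)
Definition inner (u v : vec) : cpx :=
  (Rintegral mu3 setT (fun k => (u k).1 * (v k).1 + (u k).2 * (v k).2),
   Rintegral mu3 setT (fun k => (u k).1 * (v k).2 - (u k).2 * (v k).1)).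

Definition ae_eqv (u v : vec) : Prop := {ae mu3, forall k, u k = v k}.

Definition Gamma (v : vec) : vec := fun k =>
  let w := v ((- k.1.1, - k.1.2), - k.2) in (w.1, - w.2).

(* P_eps: orthogonal projection onto {v | v(k) = 0 for |k| < eps},
   i.e. multiplication by the indicator of {|k| >= eps} *)
Definition Peps (eps : R) (v : vec) : vec := fun k =>
  if absk k < eps then (0, 0) else v k.

Definition Pshell (eps : nat -> R) (i : nat) (v : vec) : vec := fun k =>
  ((Peps (eps i.+1) v k).1 - (Peps (eps i) v k).1,
   (Peps (eps i.+1) v k).2 - (Peps (eps i) v k).2).

(* D_0 = union over eps > 0 of P_eps K *)
Definition D0 (v : vec) : Prop :=
  sq_int v /\ exists eps : R, 0 < eps /\ {ae mu3, forall k, absk k < eps -> v k = (0, 0)}.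

Definition orthonormal_fam (n : nat) (e : 'I_n -> vec) : Prop :=
  (forall j, sq_int (e j)) /\
  (forall j l, inner (e j) (e l) = ((j == l)%:R, 0)).

(* the finite-rank orthogonal projection onto span(e_0, ..., e_(n-1)):
   Q v = \sum_j <e_j, v> e_j ; its rank is n when e is orthonormal *)
Definition fin_proj (n : nat) (e : 'I_n -> vec) (v : vec) : vec := fun k =>
  (\sum_(j < n) (cmul (inner (e j) v) (e j k)).1,
   \sum_(j < n) (cmul (inner (e j) v) (e j k)).2).

(* omega_r = omega (1 - P_0) + eps_1 P_0 with P_0 = P_{eps_1}, as a
   multiplication operator by the function wr *)
Definition wr (eps1 : R) (k : R * R * R) : R :=
  let ind := if absk k < eps1 then 0 else 1 in
  absk k * (1 - ind) + eps1 * ind.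

Definition sqrt_wr (eps1 : R) (v : vec) : vec := fun k =>
  cscale (Num.sqrt (wr eps1 k)) (v k).

(* partial sums of T_2 = 1 + \sum_(i >= 1) (1/b_i - 1) Q_i, with Q_i the
   projection onto the span of e i *)
Definition T2N (b : nat -> R) (n : nat -> nat) (e : forall i, 'I_(n i) -> vec)
  (N : nat) (w : vec) : vec := fun k =>
  ((w k).1 + \sum_(1 <= i < N.+1) (cscale ((b i)^-1 - 1) (fin_proj (e i) w k)).1,
   (w k).2 + \sum_(1 <= i < N.+1) (cscale ((b i)^-1 - 1) (fin_proj (e i) w k)).2).

End Defs.

(* Main.v *)
Require Import Defs.
From mathcomp Require Import all_boot all_order all_algebra.
From mathcomp Require Import all_classical all_reals all_analysis.
From mathcomp Require Import measurable_realfun ring lra.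
Import Order.TTheory GRing.Theory Num.Theory.
Local Open Scope ring_scope.
Local Open Scope classical_set_scope.
Section A.
Context (R : realType).
Local Notation vec := (vec R).
Local Notation mu := (@mu3 R).

Lemma mabsk : measurable_fun setT (@absk R).
Proof.
apply: measurableT_comp; first exact: continuous_measurable_fun (@sqrt_continuous R).
apply: measurable_funD; first apply: measurable_funD.
- apply: measurable_funX; apply: measurableT_comp; [exact: measurable_fst|exact: measurable_fst].
- apply: measurable_funX; apply: measurableT_comp; [exact: measurable_snd|exact: measurable_fst].
- apply: measurable_funX; exact: measurable_snd.
Qed.

Lemma mEFin (g : R * R * R -> R) : measurable_fun setT g ->
  measurable_fun setT (fun k => (g k)%:E).
Proof. by move=> mg; apply/measurable_EFinP. Qed.

Definition mvec (v : vec) := measurable_fun setT (fun k => (v k).1) /\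
  measurable_fun setT (fun k => (v k).2).

Lemma cmodsq_ge0 (z : cpx R) : 0 <= cmodsq z.
Proof. by rewrite /cmodsq addr_ge0 // sqr_ge0. Qed.

Lemma mcmodsq (v : vec) : mvec v -> measurable_fun setT (fun k => cmodsq (v k)).
Proof. by case=> m1 m2; apply: measurable_funD; exact: measurable_funX. Qed.

Lemma mcmodsqE (v : vec) : mvec v -> measurable_fun setT (fun k => (cmodsq (v k))%:E).
Proof. by move=> mv; apply: mEFin; exact: mcmodsq. Qed.

Lemma sq_int_mvec (v : vec) : sq_int v -> mvec v.
Proof. by case. Qed.

Lemma normsq_ge0 (v : vec) : (0 <= normsq v)%E.
Proof. by apply: integral_ge0 => k _; rewrite lee_fin cmodsq_ge0. Qed.

Lemma int_le (f : R * R * R -> R) (y z : vec) c :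
  measurable_fun setT f -> 0 <= c ->
  (forall k, `|f k| <= c * (cmodsq (y k) + cmodsq (z k))) ->
  sq_int y -> sq_int z -> (\int[mu]_k (`|f k|)%:E < +oo)%E.
Proof.
move=> mf c0 fle [my1 my2 iy] [mz1 mz2 iz].
have my : mvec y by [].
have mz : mvec z by [].
apply: (@le_lt_trans _ _ (\int[mu]_k ((c * (cmodsq (y k) + cmodsq (z k)))%:E))%E).
  apply: ge0_le_integral => //.
  all: try (by move=> k _; rewrite lee_fin).
  - by apply: mEFin; exact: (measurableT_comp (@normr_measurable R setT) mf).
  - apply: mEFin; apply: measurable_funM => //.
    by apply: measurable_funD; exact: mcmodsq.
under eq_integral do rewrite EFinM EFinD.
rewrite ge0_integralZl_EFin //; last 2 first.
- by move=> k _; rewrite -EFinD lee_fin addr_ge0 // cmodsq_ge0.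
- by apply: mEFin; apply: measurable_funD; exact: mcmodsq.
rewrite ge0_integralD //; last 4 first.
- by move=> k _; rewrite lee_fin cmodsq_ge0.
- exact: mcmodsqE.
- by move=> k _; rewrite lee_fin cmodsq_ge0.
- exact: mcmodsqE.
by apply: lte_mul_pinfty => //; apply: lte_add_pinfty.
Qed.

Lemma sq_int_le (x y z : vec) c : mvec x -> 0 <= c ->
  (forall k, cmodsq (x k) <= c * (cmodsq (y k) + cmodsq (z k))) ->
  sq_int y -> sq_int z -> sq_int x.
Proof.
move=> [mx1 mx2] c0 le sy sz; split => //.
have := @int_le (fun k => cmodsq (x k)) y z c (@mcmodsq x (conj mx1 mx2)) c0.
rewrite /normsq; under eq_integral do rewrite ger0_norm ?cmodsq_ge0//.
by apply => // k; rewrite ger0_norm ?cmodsq_ge0.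
Qed.

Lemma integrable_le (f : R * R * R -> R) (y z : vec) c :
  measurable_fun setT f -> 0 <= c ->
  (forall k, `|f k| <= c * (cmodsq (y k) + cmodsq (z k))) ->
  sq_int y -> sq_int z -> mu.-integrable setT (EFin \o f).
Proof.
move=> mf c0 le sy sz; apply/integrableP; split.
  exact/measurable_EFinP.
have h := @int_le f y z c mf c0 le sy sz.
apply: (le_lt_trans _ h); rewrite le_eqVlt; apply/orP; left; apply/eqP.
by apply: eq_integral => k _.
Qed.


Definition dot (x y : vec) (k : R * R * R) := (x k).1 * (y k).1 + (x k).2 * (y k).2.
Definition ip (x y : vec) : R := Rintegral mu setT (dot x y).
Definition vadd (x y : vec) : vec := fun k => ((x k).1 + (y k).1, (x k).2 + (y k).2).
Definition vscale (a : R) (x : vec) : vec := fun k => (a * (x k).1, a * (x k).2).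
Definition vsum (I : Type) (s : seq I) (F : I -> vec) : vec :=
  fun k => (\sum_(i <- s) (F i k).1, \sum_(i <- s) (F i k).2).
Arguments vsum {I}.
Definition vzero : vec := fun _ => (0, 0).

Lemma dot_integrable x y : sq_int x -> sq_int y -> mu.-integrable setT (EFin \o dot x y).
Proof.
move=> sx sy; apply: (@integrable_le _ x y 1) => //.
- case: sx => mx1 mx2 _; case: sy => my1 my2 _.
  by apply: measurable_funD; apply: measurable_funM.
- move=> k; rewrite mul1r /dot /cmodsq ler_norml.
  move: ((x k).1) ((x k).2) ((y k).1) ((y k).2) => a b c d.
  have h1 := sqr_ge0 (a - c); have h2 := sqr_ge0 (a + c).
  have h3 := sqr_ge0 (b - d); have h4 := sqr_ge0 (b + d).
  rewrite !expr2 in h1 h2 h3 h4 *.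
  apply/andP; split; nra.
Qed.

Lemma sq_int_zero : sq_int vzero.
Proof.
split; [exact: measurable_cst|exact: measurable_cst|].
rewrite /normsq; under eq_integral do rewrite /cmodsq /= expr2 mul0r addr0.
by rewrite integral0 ltry.
Qed.

Lemma sq_int_add x y : sq_int x -> sq_int y -> sq_int (vadd x y).
Proof.
move=> sx sy; apply: (@sq_int_le _ x y 2) => //.
- case: sx => mx1 mx2 _; case: sy => my1 my2 _.
  by split; apply: measurable_funD.
- move=> k; rewrite /vadd /cmodsq /=.
  move: ((x k).1) ((x k).2) ((y k).1) ((y k).2) => a b c d.
  have h1 := sqr_ge0 (a - c); have h3 := sqr_ge0 (b - d).
  rewrite !expr2 in h1 h3 *; nra.
Qed.

Lemma sq_int_scale a x : sq_int x -> sq_int (vscale a x).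
Proof.
move=> sx; apply: (@sq_int_le _ x x (a ^+ 2)) => //.
- case: sx => mx1 mx2 _.
  by split; apply: measurable_funM => //; exact: measurable_cst.
- exact: sqr_ge0.
- move=> k; rewrite /vscale /cmodsq /=.
  move: ((x k).1) ((x k).2) => c d.
  have h1 := sqr_ge0 (a * c); have h3 := sqr_ge0 (a * d).
  rewrite !expr2 in h1 h3 *; nra.
Qed.

Lemma sq_int_sum (I : Type) (s : seq I) F : (forall i, sq_int (F i)) -> sq_int (vsum s F).
Proof.
move=> sF; elim: s => [|i s IH].
  have -> : vsum [::] F = vzero by apply: funext => k; rewrite /vsum !big_nil.
  exact: sq_int_zero.
have -> : vsum (i :: s) F = vadd (F i) (vsum s F).
  by apply: funext => k; rewrite /vsum /vadd !big_cons.
exact: sq_int_add.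
Qed.

Lemma ip_addl x z y : sq_int x -> sq_int z -> sq_int y ->
  ip (vadd x z) y = ip x y + ip z y.
Proof.
move=> sx sz sy; rewrite /ip -RintegralD //; last 2 first.
- exact: dot_integrable.
- exact: dot_integrable.
by apply: eq_Rintegral => k _; rewrite /dot /vadd /=; ring.
Qed.

Lemma ip_scalel a x y : sq_int x -> sq_int y -> ip (vscale a x) y = a * ip x y.
Proof.
move=> sx sy; rewrite /ip -RintegralZl //; last exact: dot_integrable.
by apply: eq_Rintegral => k _; rewrite /dot /vscale /=; ring.
Qed.

Lemma ip_sym x y : ip x y = ip y x.
Proof. by rewrite /ip; apply: eq_Rintegral => k _; rewrite /dot; ring. Qed.

Lemma ip_zero y : ip vzero y = 0.
Proof.
rewrite /ip; transitivity (Rintegral mu setT (fun _ => 0 : R)).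
  by apply: eq_Rintegral => k _; rewrite /dot /vzero /=; ring.
by rewrite Rintegral_cst // mul0r.
Qed.

Lemma ip_suml (I : Type) (s : seq I) F y : (forall i, sq_int (F i)) -> sq_int y ->
  ip (vsum s F) y = \sum_(i <- s) ip (F i) y.
Proof.
move=> sF sy; elim: s => [|i s IH].
  have -> : vsum [::] F = vzero by apply: funext => k; rewrite /vsum !big_nil.
  by rewrite big_nil ip_zero.
have -> : vsum (i :: s) F = vadd (F i) (vsum s F).
  by apply: funext => k; rewrite /vsum /vadd !big_cons.
by rewrite big_cons ip_addl // ?IH //; exact: sq_int_sum.
Qed.

Lemma ip_ge0 x : 0 <= ip x x.
Proof.
by apply: Rintegral_ge0 => k _; rewrite /dot addr_ge0 // -expr2 sqr_ge0.
Qed.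

Lemma ip_self x : sq_int x -> (ip x x)%:E = normsq x.
Proof.
move=> sx; have e : (\int[mu]_k (dot x x k)%:E)%E = normsq x.
  by apply: eq_integral => k _; rewrite /dot /cmodsq !expr2.
rewrite /ip /Rintegral e fineK // ge0_fin_numE ?normsq_ge0 //.
by case: sx.
Qed.


Definition gv (x : vec) : vec := fun k => (- (x k).2, (x k).1).

Lemma sq_int_gv x : sq_int x -> sq_int (gv x).
Proof.
move=> sx; apply: (@sq_int_le _ x x 1) => //.
- case: sx => mx1 mx2 _; split => //; exact: measurable_funN.
- move=> k; rewrite /gv /cmodsq /= mul1r sqrrN.
  have := cmodsq_ge0 (x k); rewrite /cmodsq; lra.
Qed.

Lemma inner_ip x y : inner x y = (ip x y, ip (gv x) y).
Proof.
congr pair; rewrite /ip; apply: eq_Rintegral => k _; rewrite /dot /gv /=; ring.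
Qed.

Lemma bessel n (e : 'I_n -> vec) u : orthonormal_fam e -> sq_int u ->
  (normsq (fin_proj e u) <= normsq u)%E.
Proof.
case=> se on su.
pose H j := vadd (vscale (ip (e j) u) (e j)) (vscale (ip (gv (e j)) u) (gv (e j))).
pose S := vsum (index_enum 'I_n) H.
have sH j : sq_int (H j).
  by apply: sq_int_add; apply: sq_int_scale => //; apply: sq_int_gv.
have sS : sq_int S by exact: sq_int_sum.
have eS : fin_proj e u = S.
  apply: funext => k; rewrite /fin_proj /S /vsum; congr pair;
    apply: eq_bigr => j _; rewrite inner_ip /cmul /H /vadd /vscale /gv /=; ring.
have dee j l : ip (e j) (e l) = (j == l)%:R.
  by have := on j l; rewrite inner_ip => -[].
have dge j l : ip (gv (e j)) (e l) = 0.
  by have := on j l; rewrite inner_ip => -[].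
have dgg j l : ip (gv (e j)) (gv (e l)) = (j == l)%:R.
  rewrite -(dee j l) /ip; apply: eq_Rintegral => k _; rewrite /dot /gv /=; ring.
have deg j l : ip (e j) (gv (e l)) = 0 by rewrite ip_sym dge.
have ipHy j y : sq_int y ->
    ip (H j) y = ip (e j) u * ip (e j) y + ip (gv (e j)) u * ip (gv (e j)) y.
  move=> sy; rewrite /H ip_addl ?ip_scalel //.
  - exact: sq_int_gv.
  - exact: sq_int_scale.
  - by apply: sq_int_scale; exact: sq_int_gv.
have Su : ip S u = \sum_j (ip (e j) u ^+ 2 + ip (gv (e j)) u ^+ 2).
  rewrite /S ip_suml //; apply: eq_bigr => j _; by rewrite ipHy // !expr2.
have eSl l : ip (e l) S = ip (e l) u.
  rewrite ip_sym /S ip_suml //.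
  under eq_bigr => j _ do rewrite ipHy ?dee ?dge ?mulr0 ?addr0 //.
  rewrite (bigD1 l) //= eqxx mulr1 big1 ?addr0 // => j /negbTE ->.
  by rewrite mulr0.
have gSl l : ip (gv (e l)) S = ip (gv (e l)) u.
  have sgl : sq_int (gv (e l)) by exact: sq_int_gv.
  rewrite ip_sym /S ip_suml //.
  under eq_bigr => j _ do rewrite ipHy ?deg ?dgg ?mulr0 ?add0r //.
  rewrite (bigD1 l) //= eqxx mulr1 big1 ?addr0 // => j /negbTE ->.
  by rewrite mulr0.
have SS : ip S S = \sum_j (ip (e j) u ^+ 2 + ip (gv (e j)) u ^+ 2).
  rewrite {1}/S ip_suml //; apply: eq_bigr => j _; by rewrite ipHy // eSl gSl !expr2.
have sS' : sq_int (vscale (-1) S) by exact: sq_int_scale.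
pose r := vadd u (vscale (-1) S).
have sr : sq_int r by exact: sq_int_add.
have rr : ip r r = ip u u - ip S u - ip u S + ip S S.
  rewrite {1}/r ip_addl // ip_scalel // (ip_sym u r) (ip_sym S r) /r.
  rewrite !ip_addl // !ip_scalel //; ring.
have r0 := ip_ge0 r.
have uS : ip u S = ip S u by rewrite ip_sym.
rewrite eS -(@ip_self S sS) -(@ip_self u su) lee_fin.
lra.
Qed.

Definition shind (lo hi : R) (k : R * R * R) : R :=
  if absk k < lo then 0 else if absk k < hi then 1 else 0.

Lemma shind_ge0 (lo hi : R) (k : R * R * R) : 0 <= shind lo hi k.
Proof. by rewrite /shind; case: ifP => _ //; case: ifP. Qed.

Lemma shind_le1 (lo hi : R) (k : R * R * R) : shind lo hi k <= 1.
Proof. by rewrite /shind; case: ifP => _ //; case: ifP. Qed.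

Lemma Pshell_cmodsq (eps : nat -> R) i (x : vec) k : eps i.+1 < eps i ->
  cmodsq (Pshell eps i x k) = shind (eps i.+1) (eps i) k * cmodsq (x k).
Proof.
move=> lt; rewrite /Pshell /Peps /shind.
case: (ltP (absk k) (eps i.+1)) => h1; case: (ltP (absk k) (eps i)) => h2 /=;
  rewrite /cmodsq /=; try ring.
have := lt_trans h1 lt; rewrite ltNge h2 //.
Qed.

Lemma mvec_Peps (e : R) (x : vec) : mvec x -> mvec (Peps e x).
Proof.
have mc : measurable_fun setT (fun k => absk k < e).
  by apply: measurable_fun_ltr; [exact: mabsk|exact: measurable_cst].
case=> m1 m2; split.
- rewrite (_ : (fun k => (Peps e x k).1) = fun k => if absk k < e then 0 else (x k).1).
    by apply: measurable_fun_ifT => //; exact: measurable_cst.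
  by apply: funext => k; rewrite /Peps; case: ifP.
- rewrite (_ : (fun k => (Peps e x k).2) = fun k => if absk k < e then 0 else (x k).2).
    by apply: measurable_fun_ifT => //; exact: measurable_cst.
  by apply: funext => k; rewrite /Peps; case: ifP.
Qed.

Lemma mvec_Pshell eps i (x : vec) : mvec x -> mvec (Pshell eps i x).
Proof.
move=> mx; have [a1 a2] := @mvec_Peps (eps i.+1) x mx.
have [b1 b2] := @mvec_Peps (eps i) x mx.
by split; apply: measurable_funB.
Qed.

Lemma sq_int_Pshell eps i (x : vec) : eps i.+1 < eps i -> sq_int x -> sq_int (Pshell eps i x).
Proof.
move=> lt sx; apply: (@sq_int_le _ x x 1) => //.
- by apply: mvec_Pshell; case: sx.
- move=> k; rewrite Pshell_cmodsq // mul1r.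
  have := shind_le1 (eps i.+1) (eps i) k; have := shind_ge0 (eps i.+1) (eps i) k.
  have := cmodsq_ge0 (x k); nra.
Qed.

Lemma absk_ge0 (k : R * R * R) : 0 <= absk k.
Proof. exact: sqrtr_ge0. Qed.

Lemma wrE (e1 : R) (k : R * R * R) : wr e1 k = if absk k < e1 then absk k else e1.
Proof. by rewrite /wr; case: ifP => _; ring. Qed.

Lemma mwr (e1 : R) : measurable_fun setT (wr e1).
Proof.
rewrite (_ : wr e1 = fun k => if absk k < e1 then absk k else e1).
  apply: measurable_fun_ifT; [|exact: mabsk|exact: measurable_cst].
  by apply: measurable_fun_ltr; [exact: mabsk|exact: measurable_cst].
by apply: funext => k; rewrite wrE.
Qed.

Lemma wr_ge0 (e1 : R) (k : R * R * R) : 0 <= e1 -> 0 <= wr e1 k.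
Proof. by move=> e0; rewrite wrE; case: ifP => _ //; exact: absk_ge0. Qed.

Lemma wr_le (e1 : R) (k : R * R * R) : wr e1 k <= e1.
Proof. by rewrite wrE; case: ifP => h //; exact: ltW. Qed.

Lemma cmodsq_sqrt_wr (e1 : R) (v : vec) k : 0 <= e1 ->
  cmodsq (sqrt_wr e1 v k) = wr e1 k * cmodsq (v k).
Proof.
move=> e0; rewrite /sqrt_wr /cscale /cmodsq /= !exprMn sqr_sqrtr ?wr_ge0 //; ring.
Qed.

Lemma mvec_sqrt_wr (e1 : R) (v : vec) : mvec v -> mvec (sqrt_wr e1 v).
Proof.
have ms : measurable_fun setT (fun k => Num.sqrt (wr e1 k)).
  apply: measurableT_comp; last exact: mwr.
  exact: continuous_measurable_fun (@sqrt_continuous R).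
by case=> m1 m2; split; apply: measurable_funM.
Qed.

Lemma sq_int_sqrt_wr (e1 : R) (v : vec) : 0 <= e1 -> sq_int v -> sq_int (sqrt_wr e1 v).
Proof.
move=> e0 sv; apply: (@sq_int_le _ v v e1) => //.
- by apply: mvec_sqrt_wr; case: sv.
- move=> k; rewrite cmodsq_sqrt_wr //.
  have := wr_le e1 k; have := @wr_ge0 e1 k e0; have := cmodsq_ge0 (v k); nra.
Qed.

Lemma eps_le1 (eps : nat -> R) : (forall i, (0 < i)%N -> eps i.+1 < eps i) ->
  forall N, eps N.+1 <= eps 1%N.
Proof.
move=> dec; elim => [|N IH] //.
by apply: le_trans IH; apply: ltW; apply: dec.
Qed.

Lemma shell_sum (eps : nat -> R) N k : (forall i, (0 < i)%N -> eps i.+1 < eps i) ->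
  \sum_(1 <= i < N.+1) shind (eps i.+1) (eps i) k = shind (eps N.+1) (eps 1%N) k.
Proof.
move=> dec; elim: N => [|N IH].
  rewrite big_geq // /shind; by case: ifP => // ->.
rewrite big_nat_recr //= IH /shind.
have d1 := dec N.+1 isT; have d2 := @eps_le1 eps dec N.
case: (ltP (absk k) (eps N.+2)) => h1; case: (ltP (absk k) (eps N.+1)) => h2;
  case: (ltP (absk k) (eps 1%N)) => h3; lra.
Qed.

Lemma alg (A x L M l m : R) : 0 <= L -> 0 <= M -> 0 <= l -> 0 <= m ->
  A ^+ 2 <= L * M -> x ^+ 2 <= l * m -> (A + x) ^+ 2 <= (L + l) * (M + m).
Proof.
move=> L0 M0 l0 m0 hA hx.
have h1 : (A * x) ^+ 2 <= (L * M) * (l * m).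
  rewrite exprMn; apply: ler_pM => //; exact: sqr_ge0.
have h2 : 4 * ((L * M) * (l * m)) <= (L * m + l * M) ^+ 2.
  have := sqr_ge0 (L * m - l * M); rewrite !expr2 => h; nra.
have h3 : 2 * (A * x) <= L * m + l * M.
  have z0 : 0 <= L * m + l * M by apply: addr_ge0; apply: mulr_ge0.
  have : (2 * (A * x)) ^+ 2 <= (L * m + l * M) ^+ 2.
    rewrite exprMn; apply: le_trans h2; rewrite (_ : 2 ^+ 2 = 4); last by rewrite expr2; lra.
    by apply: ler_wpM2l => //; lra.
  move=> h; case: (lerP (2 * (A * x)) 0) => h'.
  - exact: le_trans h' z0.
  - by rewrite -(@ler_pXn2r _ 2) // nnegrE ltW.
rewrite !expr2 in hA hx *; nra.
Qed.

Lemma cs_seq (s : seq nat) (a : R) (x lam m : nat -> R) :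
  (forall i, i \in s -> 0 <= lam i) -> (forall i, i \in s -> 0 <= m i) ->
  (forall i, i \in s -> x i ^+ 2 <= lam i * m i) ->
  (a + \sum_(i <- s) x i) ^+ 2 <= (1 + \sum_(i <- s) lam i) * (a ^+ 2 + \sum_(i <- s) m i).
Proof.
elim: s => [|j s IH] hl hm hx.
  by rewrite !big_nil !addr0 mul1r.
have sub i : i \in s -> i \in j :: s by move=> h; rewrite in_cons h orbT.
have jin : j \in j :: s by rewrite in_cons eqxx.
have IH' := IH (fun i h => hl i (sub i h)) (fun i h => hm i (sub i h)) (fun i h => hx i (sub i h)).
have L0 : 0 <= 1 + \sum_(i <- s) lam i.
  by apply: addr_ge0 => //; rewrite big_seq; apply: sumr_ge0 => i /sub /hl.
have M0 : 0 <= a ^+ 2 + \sum_(i <- s) m i.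
  by apply: addr_ge0; [exact: sqr_ge0|rewrite big_seq; apply: sumr_ge0 => i /sub /hm].
rewrite !big_cons.
have := @alg _ _ _ _ _ _ L0 M0 (hl j jin) (hm j jin) IH' (hx j jin).
congr (_ <= _); [congr (_ ^+ 2)|]; ring.
Qed.

Lemma fp0 m (e : 'I_m -> vec) u k : m = 0%N -> fin_proj e u k = (0, 0).
Proof. by case: m e => // e _; rewrite /fin_proj !big_ord0. Qed.

Lemma sq_int_fin_proj n (e : 'I_n -> vec) u : orthonormal_fam e -> sq_int u ->
  sq_int (fin_proj e u).
Proof.
case=> se on su.
pose H j := vadd (vscale (ip (e j) u) (e j)) (vscale (ip (gv (e j)) u) (gv (e j))).
have sH j : sq_int (H j).
  by apply: sq_int_add; apply: sq_int_scale => //; apply: sq_int_gv.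
have -> : fin_proj e u = vsum (index_enum 'I_n) H.
  apply: funext => k; rewrite /fin_proj /vsum; congr pair;
    apply: eq_bigr => j _; rewrite inner_ip /cmul /H /vadd /vscale /gv /=; ring.
exact: sq_int_sum.
Qed.

Lemma sq_int_sum_in (s : seq nat) F : (forall i, i \in s -> sq_int (F i)) -> sq_int (vsum s F).
Proof.
elim: s => [|i s IH] sF.
  have -> : vsum [::] F = vzero by apply: funext => k; rewrite /vsum !big_nil.
  exact: sq_int_zero.
have -> : vsum (i :: s) F = vadd (F i) (vsum s F).
  by apply: funext => k; rewrite /vsum /vadd !big_cons.
apply: sq_int_add; first by apply: sF; rewrite in_cons eqxx.
by apply: IH => j js; apply: sF; rewrite in_cons js orbT.
Qed.

Lemma keyineq (ep bb nn y : R) : 0 < ep -> 0 < bb -> bb < 1 -> 1 <= nn ->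
  ((bb^-1 - 1) * y) ^+ 2 <= (ep / bb ^+ 2 * nn) * (y ^+ 2 / ep).
Proof.
move=> ep0 b0 b1 n1.
have be : 1 < bb^-1 by rewrite invf_gt1.
have -> : ep / bb ^+ 2 * nn * (y ^+ 2 / ep) = (bb^-1) ^+ 2 * nn * y ^+ 2.
  by field; apply/andP; split; apply: lt0r_neq0.
move: (bb^-1) be => B be.
have := sqr_ge0 y; rewrite !expr2 => y0.
have h : (B - 1) * (B - 1) <= B * B * nn by nra.
nra.
Qed.

Definition nq (x : vec) : R := fine (normsq x).

Lemma nqE x : sq_int x -> normsq x = (nq x)%:E.
Proof. by case=> _ _ h; rewrite /nq fineK // ge0_fin_numE // normsq_ge0. Qed.

Lemma nq_ge0 x : 0 <= nq x.
Proof. by rewrite /nq fine_ge0 // normsq_ge0. Qed.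

Lemma shind_wr (lo hi e1 : R) k : hi <= e1 ->
  shind lo hi k * wr e1 k <= hi * shind lo hi k.
Proof.
move=> he; rewrite /shind wrE.
have := absk_ge0 k.
case: (ltP (absk k) lo) => h1; case: (ltP (absk k) hi) => h2;
  case: (ltP (absk k) e1) => h3; lra.
Qed.

Lemma normsqZ (c : R) (x : vec) : 0 <= c -> mvec x ->
  (\int[mu]_k ((c * cmodsq (x k))%:E) = c%:E * normsq x)%E.
Proof.
move=> c0 mx.
transitivity (\int[mu]_k (c%:E * (cmodsq (x k))%:E))%E.
  by apply: eq_integral => k _; rewrite EFinM.
rewrite ge0_integralZl_EFin.
- by [].
- exact: measurableT.
- by move=> k _; rewrite lee_fin cmodsq_ge0.
- exact: mcmodsqE.
- exact: c0.
Qed.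

End A.

Arguments normsqZ {R}.
Arguments mabsk {R}.
Arguments mEFin {R}.
Arguments mvec {R}.
Arguments cmodsq_ge0 {R}.
Arguments mcmodsq {R}.
Arguments mcmodsqE {R}.
Arguments sq_int_mvec {R}.
Arguments normsq_ge0 {R}.
Arguments int_le {R}.
Arguments sq_int_le {R}.
Arguments integrable_le {R}.
Arguments dot {R}.
Arguments ip {R}.
Arguments vadd {R}.
Arguments vscale {R}.
Arguments vsum {R I}.
Arguments vzero {R}.
Arguments dot_integrable {R}.
Arguments sq_int_zero {R}.
Arguments sq_int_add {R}.
Arguments sq_int_scale {R}.
Arguments sq_int_sum {R}.
Arguments ip_addl {R}.
Arguments ip_scalel {R}.
Arguments ip_sym {R}.
Arguments ip_zero {R}.
Arguments ip_suml {R}.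
Arguments ip_ge0 {R}.
Arguments ip_self {R}.
Arguments gv {R}.
Arguments sq_int_gv {R}.
Arguments inner_ip {R}.
Arguments bessel {R}.
Arguments shind {R}.
Arguments shind_ge0 {R}.
Arguments shind_le1 {R}.
Arguments Pshell_cmodsq {R}.
Arguments mvec_Peps {R}.
Arguments mvec_Pshell {R}.
Arguments sq_int_Pshell {R}.
Arguments absk_ge0 {R}.
Arguments wrE {R}.
Arguments mwr {R}.
Arguments wr_ge0 {R}.
Arguments wr_le {R}.
Arguments cmodsq_sqrt_wr {R}.
Arguments mvec_sqrt_wr {R}.
Arguments sq_int_sqrt_wr {R}.
Arguments eps_le1 {R}.
Arguments shell_sum {R}.
Arguments alg {R}.
Arguments cs_seq {R}.
Arguments fp0 {R}.
Arguments sq_int_fin_proj {R}.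
Arguments sq_int_sum_in {R}.
Arguments keyineq {R}.
Arguments nq {R}.
Arguments nqE {R}.
Arguments nq_ge0 {R}.
Arguments shind_wr {R}.

Theorem lemma5p4 (R : realType) (eps b : nat -> R) (n : nat -> nat)
  (e : forall i : nat, 'I_(n i) -> vec R) :
  (forall i, (0 < i)%N -> 0 < eps i) ->
  (forall i, (0 < i)%N -> eps i.+1 < eps i) ->
  eps @ \oo --> 0 ->
  (forall i, (0 < i)%N -> orthonormal_fam (e i)) ->
  (forall i, (0 < i)%N -> forall v : vec R, sq_int v ->
     ae_eqv (fin_proj (e i) (Gamma v)) (Gamma (fin_proj (e i) v))) ->
  (forall i, (0 < i)%N -> forall v : vec R, sq_int v ->
     ae_eqv (fin_proj (e i) (Pshell eps i v)) (fin_proj (e i) v)) ->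
  (forall i, (0 < i)%N -> 0 < b i < 1) ->
  b @ \oo --> 0 ->
  (\sum_(1 <= i <oo) ((eps i / b i ^+ 2 * (n i)%:R)%:E) < +oo)%E ->
  exists C : R, forall v : vec R, D0 v ->
    \forall N \near \oo,
      (normsq (T2N b e N (sqrt_wr (eps 1%N) v)) <= C%:E * normsq v)%E.
Proof.
move=> heps hdec _ hon _ hP hb _ hser.
pose lam i := eps i / b i ^+ 2 * (n i)%:R.
have lam0 i : (0 < i)%N -> 0 <= lam i.
  move=> i0; rewrite /lam; apply: mulr_ge0 => //; apply: divr_ge0.
    exact: ltW (heps i i0).
  exact: sqr_ge0.
set Ss := (\sum_(1 <= i <oo) _)%E in hser.
have S0 : (0 <= Ss)%E by apply: nneseries_ge0 => i i1 _; rewrite lee_fin lam0.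
pose Sr := fine Ss.
have SE : Sr%:E = Ss by rewrite /Sr fineK // ge0_fin_numE.
have partial N : \sum_(1 <= i < N.+1) lam i <= Sr.
  rewrite -lee_fin SE -sumEFin; apply: nneseries_lim_ge => i i1 _.
  by rewrite lee_fin lam0.
have Sr0 : 0 <= Sr by rewrite -lee_fin SE.
exists ((1 + Sr) * (eps 1%N + 1)).
move=> v [sv _]; apply: nearW => N.
pose e1 := eps 1%N.
have e10 : 0 < e1 by exact: heps.
pose w := sqrt_wr e1 v.
have sw : sq_int w by exact: sq_int_sqrt_wr (ltW e10) sv.
pose s := index_iota 1 N.+1.
have ins i : i \in s -> (0 < i)%N by rewrite mem_index_iota => /andP[].
pose F i k := if (0 < i)%N then cmodsq (fin_proj (e i) w k) / eps i else 0.
have F0 i k : 0 <= F i k.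
  rewrite /F; case: ifP => // i0; apply: divr_ge0; first exact: cmodsq_ge0.
  exact: ltW (heps i i0).
pose L := 1 + \sum_(i <- s) lam i.
have pw k : cmodsq (T2N b e N w k) <= L * (cmodsq (w k) + \sum_(i <- s) F i k).
  pose x1 i := ((b i)^-1 - 1) * (fin_proj (e i) w k).1.
  pose x2 i := ((b i)^-1 - 1) * (fin_proj (e i) w k).2.
  pose m1 i := if (0 < i)%N then (fin_proj (e i) w k).1 ^+ 2 / eps i else 0.
  pose m2 i := if (0 < i)%N then (fin_proj (e i) w k).2 ^+ 2 / eps i else 0.
  have -> : T2N b e N w k = ((w k).1 + \sum_(i <- s) x1 i, (w k).2 + \sum_(i <- s) x2 i) by [].
  have hl i : i \in s -> 0 <= lam i by move/ins; exact: lam0.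
  have hm1 i : i \in s -> 0 <= m1 i.
    move/ins => i0; rewrite /m1 i0; apply: divr_ge0; [exact: sqr_ge0|exact: ltW (heps i i0)].
  have hm2 i : i \in s -> 0 <= m2 i.
    move/ins => i0; rewrite /m2 i0; apply: divr_ge0; [exact: sqr_ge0|exact: ltW (heps i i0)].
  have key i (y : R) : (0 < i)%N -> (n i = 0%N -> y = 0) ->
      (((b i)^-1 - 1) * y) ^+ 2 <= lam i * (y ^+ 2 / eps i).
    move=> i0 hy; have /andP[b0 b1] := hb i i0.
    have [n0|n0] := eqVneq (n i) 0%N.
      by rewrite (hy n0) !expr2 !(mulr0, mul0r).
    apply: keyineq => //; first exact: heps.
    by rewrite ler1n lt0n.
  have hx1 i : i \in s -> x1 i ^+ 2 <= lam i * m1 i.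
    move/ins => i0; rewrite /m1 /x1 i0; apply: key => // n0.
    by rewrite (fp0 _ _ _ _ n0).
  have hx2 i : i \in s -> x2 i ^+ 2 <= lam i * m2 i.
    move/ins => i0; rewrite /m2 /x2 i0; apply: key => // n0.
    by rewrite (fp0 _ _ _ _ n0).
  have c1 := cs_seq s (w k).1 x1 lam m1 hl hm1 hx1.
  have c2 := cs_seq s (w k).2 x2 lam m2 hl hm2 hx2.
  have sF : \sum_(i <- s) F i k = \sum_(i <- s) m1 i + \sum_(i <- s) m2 i.
    rewrite -big_split /=; apply: eq_bigr => i _; rewrite /F /m1 /m2.
    by case: ifP => _; rewrite ?addr0 // /cmodsq mulrDl.
  move: c1 c2; rewrite -/L /cmodsq /= sF => c1 c2.
  lra.
have L0 : 0 <= L by rewrite /L; apply: addr_ge0 => //; rewrite big_seq; apply: sumr_ge0 => i /ins; exact: lam0.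
have sQ i : (0 < i)%N -> sq_int (fin_proj (e i) w).
  by move=> i0; apply: sq_int_fin_proj; [exact: hon|exact: sw].
have mF i : measurable_fun setT (F i).
  rewrite /F /=; case i0: (0 < i)%N; last exact: measurable_cst.
  apply: measurable_funM; last exact: measurable_cst.
  by apply: mcmodsq; apply: sq_int_mvec; exact: sQ.
have sT : sq_int (T2N b e N w).
  have -> : T2N b e N w = vadd w (vsum s (fun i => vscale ((b i)^-1 - 1) (fin_proj (e i) w))) by [].
  apply: sq_int_add => //; apply: sq_int_sum_in => i /ins i0.
  by apply: sq_int_scale; exact: sQ.
have I1 : (normsq (T2N b e N w) <= \int[@mu3 R]_k (L * (cmodsq (w k) + \sum_(i <- s) F i k))%:E)%E.
  apply: ge0_le_integral => //.
  - by move=> k _; rewrite lee_fin cmodsq_ge0.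
  - by apply: mcmodsqE; apply: sq_int_mvec; exact: sT.
  - apply: mEFin; apply: measurable_funM; first exact: measurable_cst.
    apply: measurable_funD; first by apply: mcmodsq; apply: sq_int_mvec; exact: sw.
    exact: measurable_sum.
  - by move=> k _; rewrite lee_fin pw.
have mFE i : measurable_fun setT (fun k => (F i k)%:E) by apply: mEFin.
have I2 : (\int[@mu3 R]_k (L * (cmodsq (w k) + \sum_(i <- s) F i k))%:E =
    L%:E * (normsq w + \sum_(i <- s) \int[@mu3 R]_k (F i k)%:E))%E.
  under eq_integral do rewrite EFinM.
  rewrite ge0_integralZl_EFin //; last 2 first.
  - by move=> k _; rewrite lee_fin addr_ge0 ?cmodsq_ge0 // sumr_ge0.
  - apply: mEFin; apply: measurable_funD; first by apply: mcmodsq; apply: sq_int_mvec; exact: sw.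
    exact: measurable_sum.
  congr (_ * _)%E.
  under eq_integral do rewrite EFinD -sumEFin.
  rewrite ge0_integralD //; last 4 first.
  - by move=> k _; rewrite lee_fin cmodsq_ge0.
  - by apply: mcmodsqE; apply: sq_int_mvec; exact: sw.
  - by move=> k _; rewrite sumEFin lee_fin sumr_ge0.
  - by apply: emeasurable_sum.
  congr (_ + _)%E.
  rewrite ge0_integral_sum //.
  by move=> i k _; rewrite lee_fin.
have epsle i : (0 < i)%N -> eps i <= e1.
  by case: i => // i _; exact: eps_le1.
have IF i : i \in s -> (\int[@mu3 R]_k (F i k)%:E <= normsq (Pshell eps i v))%E.
  move/ins => i0.
  have ei0 := heps i i0.
  have sPw : sq_int (Pshell eps i w) by apply: sq_int_Pshell => //; exact: hdec.
  have sPv : sq_int (Pshell eps i v) by apply: sq_int_Pshell => //; exact: hdec.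
  have -> : (\int[@mu3 R]_k (F i k)%:E = ((eps i)^-1)%:E * normsq (fin_proj (e i) w))%E.
    rewrite /normsq -ge0_integralZl_EFin //; last 3 first.
    - by move=> k _; rewrite lee_fin cmodsq_ge0.
    - by apply: mcmodsqE; apply: sq_int_mvec; exact: sQ.
    - by rewrite invr_ge0 ltW.
    by apply: eq_integral => k _; rewrite /F i0 -EFinM mulrC.
  have ae : normsq (fin_proj (e i) w) = normsq (fin_proj (e i) (Pshell eps i w)).
    rewrite /normsq; apply: ae_eq_integral => //.
    - by apply: mcmodsqE; apply: sq_int_mvec; exact: sQ.
    - apply: mcmodsqE; apply: sq_int_mvec; apply: sq_int_fin_proj => //; exact: hon.
    - apply: (@filterS _ (almost_everywhere (@mu3 R)) (ae_filter_ringOfSetsType _) _ _ _ (hP i i0 w sw)).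
      by move=> k hk _; rewrite /= hk.
  have bes := bessel _ _ _ (hon i i0) sPw.
have pwv : (normsq (Pshell eps i w) <= (eps i)%:E * normsq (Pshell eps i v))%E.
    rewrite -normsqZ; [|exact: ltW|by apply: sq_int_mvec].
    apply: ge0_le_integral.
    - exact: measurableT.
    - by move=> k _; rewrite lee_fin cmodsq_ge0.
    - by apply: mcmodsqE; apply: sq_int_mvec; exact: sPw.
    - apply: mEFin; apply: measurable_funM; first exact: measurable_cst.
      by apply: mcmodsq; apply: sq_int_mvec; exact: sPv.
    move=> k _; rewrite lee_fin !(Pshell_cmodsq _ _ _ _ (hdec i i0)) (cmodsq_sqrt_wr _ _ _ (ltW e10)) !mulrA.
    apply: ler_wpM2r; first exact: cmodsq_ge0.
    exact: shind_wr (epsle i i0).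
  rewrite ae.
  have h1 := le_trans bes pwv.
  have ie0 : (0 <= ((eps i)^-1)%:E)%E by rewrite lee_fin invr_ge0 ltW.
  have h2 := lee_wpmul2l ie0 h1.
  apply: le_trans h2 _.
  rewrite muleA -EFinM mulVf; last exact: lt0r_neq0.
  by rewrite mul1e.
have IS : (\sum_(i <- s) \int[@mu3 R]_k (F i k)%:E <= \sum_(i <- s) normsq (Pshell eps i v))%E.
  by rewrite big_seq [X in (_ <= X)%E]big_seq; apply: lee_sum => i; exact: IF.
have mPv i : measurable_fun setT (fun k => (cmodsq (Pshell eps i v k))%:E).
  by apply: mcmodsqE; apply: mvec_Pshell; apply: sq_int_mvec.
have IV : (\sum_(i <- s) normsq (Pshell eps i v) <= normsq v)%E.
  rewrite /normsq -ge0_integral_sum //; last by move=> i k _; rewrite lee_fin cmodsq_ge0.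
  apply: ge0_le_integral.
  - exact: measurableT.
  - by move=> k _; rewrite sumEFin lee_fin sumr_ge0 // => i _; rewrite cmodsq_ge0.
  - exact: emeasurable_sum.
  - by apply: mcmodsqE; apply: sq_int_mvec.
  move=> k _; rewrite sumEFin lee_fin.
  rewrite big_seq (eq_bigr (fun i => shind (eps i.+1) (eps i) k * cmodsq (v k))); last first.
    by move=> i /ins i0; rewrite (Pshell_cmodsq _ _ _ _ (hdec i i0)).
  rewrite -big_seq -mulr_suml shell_sum //.
  have := shind_le1 (eps N.+1) (eps 1%N) k; have := cmodsq_ge0 (v k).
  have := shind_ge0 (eps N.+1) (eps 1%N) k; nra.
have IW : (normsq w <= e1%:E * normsq v)%E.
  rewrite -normsqZ; [|exact: ltW|by apply: sq_int_mvec].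
  apply: ge0_le_integral.
  - exact: measurableT.
  - by move=> k _; rewrite lee_fin cmodsq_ge0.
  - by apply: mcmodsqE; apply: sq_int_mvec.
  - apply: mEFin; apply: measurable_funM; first exact: measurable_cst.
    by apply: mcmodsq; apply: sq_int_mvec.
  move=> k _; rewrite lee_fin (cmodsq_sqrt_wr _ _ _ (ltW e10)).
  by apply: ler_wpM2r; [exact: cmodsq_ge0|exact: wr_le].
apply: le_trans I1 _; rewrite I2.
apply: le_trans (lee_wpmul2l _ (leeD IW (le_trans IS IV))) _; first by rewrite lee_fin.
rewrite (nqE _ sv).
have E1 : ((e1 * nq v + nq v)%:E = e1%:E * (nq v)%:E + (nq v)%:E)%E by rewrite EFinD EFinM.
rewrite -E1 -!EFinM lee_fin.
have LS : L <= 1 + Sr by have := partial N; rewrite /L /s; lra.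
have q0 := nq_ge0 v.
have h : 0 <= (1 + Sr - L) * ((e1 + 1) * nq v).
  by apply: mulr_ge0; [lra|apply: mulr_ge0 => //; lra].
rewrite /e1 in h *; lra.
Qed.
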